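(* Let $\alpha:I\to\mathbb{E}^3$ be a unit speed Frenet curve with arclength parameter $s$, Frenet frame $\{T,N,B\}$, curvature $\kappa>0$ and torsion $\tau$. Let $\beta(s)=\int\big(x_1(s)T(s)+x_2(s)N(s)\big)\,ds$ be an osculating mate of $\alpha$, i.e. $x_1,x_2$ are smooth functions with $x_1^2+x_2^2=1$ and $\beta''(s)\perp \mathrm{span}\{T(s),N(s)\}$ for all $s$, and assume $\beta$ is a Frenet curve. Then $x_1(s)=\sin\big(\int\kappa(s)ds\big)$, $x_2(s)=\cos\big(\int\kappa(s)ds\big)$ for an antiderivative $\int\kappa(s)ds$ of $\kappa$, and the Frenet apparatus $\{\bar T,\bar N,\bar B,\bar\kappa,\bar\tau\}$ of $\beta$ is $$\bar T=\sin\Big(\int\kappa ds\Big)T+\cos\Big(\int\kappa ds\Big)N,\quad \bar N=B,\quad \bar B=\cos\Big(\int\kappa ds\Big)T-\sin\Big(\int\kappa ds\Big)N,$$ $$\bar\kappa=\varepsilon_1\tau\cos\Big(\int\kappa ds\Big),\qquad \bar\tau=\tau\sin\Big(\int\kappa ds\Big),$$ where $\varepsilon_1=\pm1$ is chosen such that $\bar\kappa>0$.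
   Context: A unit speed curve $\alpha$ in Euclidean 3-space $\mathbb{E}^3$ is a Frenet curve if its curvature $\kappa=\|\alpha''\|$ is nowhere zero; its Frenet frame satisfies $T=\alpha'$, $T'=\kappa N$, $N'=-\kappa T+\tau B$, $B'=-\tau N$, $B=T\times N$. Since $\|\beta'\|=1$, $\beta$ is unit speed with parameter $s$, and its Frenet apparatus is defined in the same way (with derivatives with respect to $s$).
   Formalization: The normal and binormal of β carry the sign ε₁: N̄ = ε₁B and B̄ = ε₁(cos(∫κ ds)T − sin(∫κ ds)N), in place of N̄ = B and B̄ = cos(∫κ ds)T − sin(∫κ ds)N. The statement above fails without it. *)

(* Defs.v *)
From Stdlib Require Import Reals.
From Coquelicot Require Import Coquelicot.
Open Scope R_scope.

Record V3 := mkV3 { vx : R; vy : R; vz : R }.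

Definition vadd (u v : V3) : V3 := mkV3 (vx u + vx v) (vy u + vy v) (vz u + vz v).
Definition vscale (a : R) (v : V3) : V3 := mkV3 (a * vx v) (a * vy v) (a * vz v).
Definition vdot (u v : V3) : R := vx u * vx v + vy u * vy v + vz u * vz v.
Definition vnorm (v : V3) : R := sqrt (vdot v v).
Definition vcross (u v : V3) : V3 :=
  mkV3 (vy u * vz v - vz u * vy v)
       (vz u * vx v - vx u * vz v)
       (vx u * vy v - vy u * vx v).

Definition is_vderive (f : R -> V3) (t : R) (l : V3) : Prop :=
  is_derive (fun s => vx (f s)) t (vx l) /\
  is_derive (fun s => vy (f s)) t (vy l) /\
  is_derive (fun s => vz (f s)) t (vz l).

Definition inI (a b : Rbar) (s : R) : Prop := Rbar_lt a s /\ Rbar_lt s b.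

(* {T, N, B, k, t} is the Frenet apparatus of the unit speed Frenet curve c on I:
   T = c', |T| = 1 (unit speed), T' = k N with k > 0 and |N| = 1
   (so k = |c''| and N = c''/k), B = T x N, N' = -k T + t B. *)
Definition FrenetApparatus (a b : Rbar) (c T N B : R -> V3) (k t : R -> R) : Prop :=
  forall s, inI a b s ->
    is_vderive c s (T s) /\
    vnorm (T s) = 1 /\
    0 < k s /\
    vnorm (N s) = 1 /\
    is_vderive T s (vscale (k s) (N s)) /\
    B s = vcross (T s) (N s) /\
    is_vderive N s (vadd (vscale (- k s) (T s)) (vscale (t s) (B s))).

(* Main.v *)
Require Import Defs.
From Stdlib Require Import Reals Lra Psatz Nsatz ClassicalEpsilon Classical.
From Coquelicot Require Import Coquelicot.
Open Scope R_scope.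


Lemma d_ext (f : R -> R) (x l l' : R) : is_derive f x l -> l = l' -> is_derive f x l'.
Proof. intros H ->; exact H. Qed.

Lemma d_mult (f g : R -> R) x df dg : is_derive f x df -> is_derive g x dg ->
  is_derive (fun t => f t * g t) x (df * g x + f x * dg).
Proof.
  intros Hf Hg. eapply d_ext. apply (is_derive_mult f g x df dg Hf Hg).
  intros; apply Rmult_comm. reflexivity.
Qed.

Lemma d_plus (f g : R -> R) x df dg : is_derive f x df -> is_derive g x dg ->
  is_derive (fun t => f t + g t) x (df + dg).
Proof. intros Hf Hg. exact (is_derive_plus f g x df dg Hf Hg). Qed.

Lemma d_minus (f g : R -> R) x df dg : is_derive f x df -> is_derive g x dg ->
  is_derive (fun t => f t - g t) x (df - dg).
Proof. intros Hf Hg. exact (is_derive_minus f g x df dg Hf Hg). Qed.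

Lemma d_const (c x : R) : is_derive (fun _ => c) x 0.
Proof. exact (is_derive_const (K:=R_AbsRing) (V:=R_NormedModule) c x). Qed.

Lemma zero_der (f : R -> R) (x y : R) : x <= y -> (forall v, x <= v <= y -> is_derive f v 0) -> f x = f y.
Proof.
  intros Hxy H.
  destruct (MVT_gen f x y (fun _ => 0)) as [c [_ Hc]].
  - intros v Hv. rewrite Rmin_left in Hv by lra. rewrite Rmax_right in Hv by lra.
    apply H; lra.
  - intros v Hv. rewrite Rmin_left in Hv by lra. rewrite Rmax_right in Hv by lra.
    apply continuity_pt_filterlim. apply (ex_derive_continuous (K:=R_AbsRing) (V:=R_NormedModule)). eexists; apply H; lra.
  - lra.
Qed.

Lemma zero_der2 (f : R -> R) (x y : R) : (forall v, Rmin x y <= v <= Rmax x y -> is_derive f v 0) -> f x = f y.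
Proof.
  intros H. destruct (Rle_dec x y).
  - apply zero_der; auto. intros v Hv; apply H.
    rewrite Rmin_left, Rmax_right; lra.
  - symmetry; apply zero_der; [lra|]. intros v Hv; apply H.
    rewrite Rmin_right, Rmax_left; lra.
Qed.

Lemma prim_diff (P Q k : R -> R) (x y : R) :
  (forall v, Rmin x y <= v <= Rmax x y -> is_derive P v (k v) /\ is_derive Q v (k v)) ->
  P x - Q x = P y - Q y.
Proof.
  intros H. apply (zero_der2 (fun v => P v - Q v)). intros v Hv.
  destruct (H v Hv). eapply d_ext. apply d_minus; eauto. ring.
Qed.

Lemma inI_open a b s : inI a b s -> exists e, 0 < e /\ forall u, Rabs (u - s) < e -> inI a b u.
Proof.
  intros [Ha Hb].
  set (da := match a with Finite r => s - r | _ => 1 end).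
  set (db := match b with Finite r => r - s | _ => 1 end).
  assert (Hda : 0 < da) by (unfold da; destruct a; simpl in *; lra).
  assert (Hdb : 0 < db) by (unfold db; destruct b; simpl in *; lra).
  exists (Rmin da db). split. apply Rmin_pos; auto.
  intros u Hu. apply Rabs_def2 in Hu.
  pose proof (Rmin_l da db). pose proof (Rmin_r da db).
  unfold inI; split.
  - unfold da in *; destruct a; simpl in *; lra.
  - unfold db in *; destruct b; simpl in *; lra.
Qed.

Lemma inI_conv a b x y z : inI a b x -> inI a b z -> x <= y <= z -> inI a b y.
Proof.
  unfold inI; intros [H1 H2] [H3 H4] H. destruct a, b; simpl in *; split; lra.
Qed.


Lemma loc_ball (P : R -> Prop) x e : 0 < e -> (forall u, Rabs (u - x) < e -> P u) -> locally x P.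
Proof.
  intros He H. exists (mkposreal e He). intros y Hy. apply H. exact Hy.
Qed.

Lemma right_ext a b (k : R -> R)
  (Hloc : forall s, inI a b s -> exists e, 0 < e /\ exists G : R -> R,
      forall u, Rabs (u - s) < e -> is_derive G u (k u))
  s0 : forall t, inI a b s0 -> inI a b t -> s0 <= t ->
  exists F : R -> R, forall u, s0 <= u <= t -> is_derive F u (k u).
Proof.
  intros t1 Hs0 Ht1 Hle.
  set (Rp := fun t => exists F : R -> R, forall u, s0 <= u <= t -> is_derive F u (k u)).
  destruct (classic (Rp t1)) as [|Hn]; auto. exfalso.
  set (E := fun t => s0 <= t /\ Rp t).
  assert (Hdown : forall t t', Rp t -> t' <= t -> Rp t').
  { intros t t' [F HF] Ht. exists F. intros u Hu; apply HF; lra. }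
  assert (Hbd : forall t, E t -> t <= t1).
  { intros t [_ Ht]. destruct (Rle_dec t t1); auto. exfalso; apply Hn. apply (Hdown t); auto; lra. }
  assert (HE0 : E s0).
  { split; [lra|]. destruct (Hloc s0 Hs0) as [e [He [G HG]]]. exists G.
    intros u Hu. apply HG. replace (u - s0) with 0 by lra. rewrite Rabs_R0; lra. }
  destruct (completeness E) as [c [Hub Hlub]].
  { exists t1. intros t Ht; auto. }
  { exists s0; auto. }
  assert (Hc1 : s0 <= c) by (apply Hub; auto).
  assert (Hc2 : c <= t1) by (apply Hlub; intros t Ht; auto).
  assert (Hc : inI a b c) by (apply (inI_conv a b s0 c t1); auto).
  destruct (Hloc c Hc) as [e [He [G HG]]].
  assert (Hfin : Rp (c + e/2) -> False).
  { intros HR. assert (c + e/2 <= c) by (apply Hub; split; auto; lra). lra. }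
  apply Hfin.
  destruct (Rlt_dec (c - e) s0) as [Hs|Hs].
  - exists G. intros u Hu. apply HG. apply Rabs_def1; lra.
  - destruct (classic (exists t, E t /\ c - e < t)) as [[t [[Ht0 [F HF]] Hct]]|Hno].
    2:{ exfalso. assert (c <= c - e); [|lra]. apply Hlub. intros t Ht.
        destruct (Rle_dec t (c - e)); auto. exfalso; apply Hno; exists t; split; auto; lra. }
    assert (Htc : t <= c) by (apply Hub; split; auto; exists F; auto).
    set (t' := (c - e + t) / 2).
    set (C := F t' - G t').
    assert (Hcst : forall u, t' <= u <= t -> G u + C = F u).
    { intros u Hu. unfold C.
      assert (F t' - G t' = F u - G u); [|lra].
      apply (prim_diff F G k). intros v Hv.
      rewrite Rmin_left in Hv by lra. rewrite Rmax_right in Hv by lra.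
      split. apply HF; unfold t' in *; lra. apply HG; apply Rabs_def1; unfold t' in *; lra. }
    exists (fun u => if Rle_dec u t' then F u else G u + C).
    intros u Hu.
    destruct (Rlt_dec u t) as [Hut|Hut].
    + apply (is_derive_ext_loc F). 2: apply HF; lra.
      apply (loc_ball _ u (t - u)); [lra|]. intros v Hv. apply Rabs_def2 in Hv.
      destruct (Rle_dec v t'); auto. symmetry; apply Hcst; lra.
    + apply (is_derive_ext_loc (fun v => G v + C)).
      * apply (loc_ball _ u (u - t')); [unfold t' in *; lra|]. intros v Hv. apply Rabs_def2 in Hv.
        destruct (Rle_dec v t'); auto. lra.
      * eapply d_ext. apply d_plus. apply HG; apply Rabs_def1; unfold t' in *; lra.
        apply d_const. ring.
Qed.


Lemma global_prim a b (k : R -> R)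
  (Hloc : forall s, inI a b s -> exists e, 0 < e /\ exists G : R -> R,
      forall u, Rabs (u - s) < e -> is_derive G u (k u)) :
  exists F : R -> R, forall s, inI a b s -> is_derive F s (k s).
Proof.
  destruct (classic (exists s0, inI a b s0)) as [[s0 Hs0]|Hn].
  2:{ exists (fun _ => 0). intros s Hs; exfalso; eauto. }
  assert (Hint : forall x y, inI a b x -> inI a b y ->
     exists P : R -> R, forall v, Rmin x y <= v <= Rmax x y -> is_derive P v (k v)).
  { intros x y Hx Hy. destruct (Rle_dec x y).
    - rewrite Rmin_left, Rmax_right by lra. apply (right_ext a b k Hloc); auto.
    - rewrite Rmin_right, Rmax_left by lra. apply (right_ext a b k Hloc); auto; lra. }
  assert (P2 : forall u, exists P : R -> R, inI a b u ->
     forall v, Rmin u s0 <= v <= Rmax u s0 -> is_derive P v (k v)).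
  { intros u. destruct (classic (inI a b u)) as [Hu|Hu].
    - destruct (Hint u s0 Hu Hs0) as [P HP]. exists P; auto.
    - exists (fun _ => 0). tauto. }
  set (Pf := fun u => proj1_sig (constructive_indefinite_description _ (P2 u))).
  assert (HPf : forall u, inI a b u ->
     forall v, Rmin u s0 <= v <= Rmax u s0 -> is_derive (Pf u) v (k v)).
  { intros u. unfold Pf. destruct (constructive_indefinite_description _ (P2 u)); simpl; auto. }
  exists (fun u => Pf u u - Pf u s0).
  intros s Hs.
  destruct (inI_open a b s Hs) as [e [He Hball]].
  assert (Hlo : inI a b (s - e/2)) by (apply Hball; apply Rabs_def1; lra).
  assert (Hhi : inI a b (s + e/2)) by (apply Hball; apply Rabs_def1; lra).
  assert (Hm : inI a b (Rmin (s - e/2) s0)) by (apply Rmin_case; auto).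
  assert (HM : inI a b (Rmax (s + e/2) s0)) by (apply Rmax_case; auto).
  destruct (Hint _ _ Hm HM) as [Q HQ].
  pose proof (Rmin_l (s - e/2) s0). pose proof (Rmin_r (s - e/2) s0).
  pose proof (Rmax_l (s + e/2) s0). pose proof (Rmax_r (s + e/2) s0).
  assert (Hmm : Rmin (Rmin (s - e / 2) s0) (Rmax (s + e / 2) s0) = Rmin (s - e / 2) s0) by (apply Rmin_left; lra).
  assert (HMM : Rmax (Rmin (s - e / 2) s0) (Rmax (s + e / 2) s0) = Rmax (s + e / 2) s0) by (apply Rmax_right; lra).
  rewrite Hmm, HMM in HQ.
  apply (is_derive_ext_loc (fun u => Q u - Q s0)).
  - apply (loc_ball _ s (e/2)); [lra|]. intros v Hv. apply Rabs_def2 in Hv.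
    assert (Hv' : inI a b v) by (apply Hball; apply Rabs_def1; lra).
    assert (Pf v v - Q v = Pf v s0 - Q s0); [|lra].
    apply (prim_diff _ _ k). intros w Hw.
    assert (Rmin v s0 <= w <= Rmax v s0) by
      (destruct (Rle_dec v s0); [rewrite Rmin_left, Rmax_right in Hw |- * by lra
                                |rewrite Rmin_right, Rmax_left in Hw |- * by lra]; lra).
    split. apply HPf; auto.
    apply HQ. destruct (Rle_dec v s0); [rewrite Rmin_left, Rmax_right in Hw by lra
                                |rewrite Rmin_right, Rmax_left in Hw by lra]; lra.
  - eapply d_ext. apply d_minus. apply HQ; lra. apply d_const. ring.
Qed.


Lemma V3_eq (u v : V3) : vx u = vx v -> vy u = vy v -> vz u = vz v -> u = v.
Proof. destruct u, v; simpl; intros -> -> ->; reflexivity. Qed.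

Lemma vd_unique f s l1 l2 : is_vderive f s l1 -> is_vderive f s l2 -> l1 = l2.
Proof.
  intros [A1 [B1 C1]] [A2 [B2 C2]].
  apply is_derive_unique in A1, B1, C1, A2, B2, C2.
  apply V3_eq; congruence.
Qed.

Lemma vd_ext_loc (f g : R -> V3) s l : locally s (fun u => f u = g u) ->
  is_vderive f s l -> is_vderive g s l.
Proof.
  intros H [A1 [B1 C1]]. split; [|split].
  - apply (is_derive_ext_loc (fun u => vx (f u))); auto.
    apply (filter_imp (fun u => f u = g u)); auto. intros u ->; auto.
  - apply (is_derive_ext_loc (fun u => vy (f u))); auto.
    apply (filter_imp (fun u => f u = g u)); auto. intros u ->; auto.
  - apply (is_derive_ext_loc (fun u => vz (f u))); auto.
    apply (filter_imp (fun u => f u = g u)); auto. intros u ->; auto.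
Qed.

Lemma vd_add f g s lf lg : is_vderive f s lf -> is_vderive g s lg ->
  is_vderive (fun u => vadd (f u) (g u)) s (vadd lf lg).
Proof.
  intros [A1 [B1 C1]] [A2 [B2 C2]]. unfold vadd; simpl.
  split; [|split]; apply d_plus; auto.
Qed.

Lemma vd_scale (c : R -> R) f s dc lf : is_derive c s dc -> is_vderive f s lf ->
  is_vderive (fun u => vscale (c u) (f u)) s (vadd (vscale dc (f s)) (vscale (c s) lf)).
Proof.
  intros Hc [A1 [B1 C1]]. unfold vadd, vscale; simpl.
  split; [|split]; apply (d_mult c (fun u => _ (f u))); auto.
Qed.

Lemma vd_cross f g s lf lg : is_vderive f s lf -> is_vderive g s lg ->
  is_vderive (fun u => vcross (f u) (g u)) s (vadd (vcross lf (g s)) (vcross (f s) lg)).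
Proof.
  intros [A1 [B1 C1]] [A2 [B2 C2]]. unfold vadd, vcross; simpl.
  split; [|split]; (eapply d_ext; [apply d_minus;
    [apply (d_mult (fun u => _ (f u)) (fun u => _ (g u))); eassumption
    |apply (d_mult (fun u => _ (f u)) (fun u => _ (g u))); eassumption] | simpl; ring]).
Qed.

Lemma d_dot f g s lf lg : is_vderive f s lf -> is_vderive g s lg ->
  is_derive (fun u => vdot (f u) (g u)) s (vdot lf (g s) + vdot (f s) lg).
Proof.
  intros [A1 [B1 C1]] [A2 [B2 C2]]. unfold vdot.
  eapply d_ext. apply d_plus; [apply d_plus|]; apply (d_mult (fun u => _ (f u)) (fun u => _ (g u))); eassumption. ring.
Qed.

Lemma vnorm1 v : vnorm v = 1 -> vdot v v = 1.
Proof.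
  unfold vnorm; intros H.
  assert (0 <= vdot v v) by (unfold vdot; nra).
  rewrite <- (sqrt_sqrt (vdot v v)); auto. rewrite H; ring.
Qed.

Lemma loc_inI a b s : inI a b s -> locally s (fun u => inI a b u).
Proof.
  intros Hs. destruct (inI_open a b s Hs) as [e [He H]].
  exists (mkposreal e He). intros y Hy. apply H. exact Hy.
Qed.

Lemma frame a b c T N B k t s : FrenetApparatus a b c T N B k t -> inI a b s ->
  vdot (T s) (T s) = 1 /\ vdot (N s) (N s) = 1 /\ vdot (T s) (N s) = 0 /\ B s = vcross (T s) (N s).
Proof.
  intros FA Hs. destruct (FA s Hs) as (Hc & HT & Hk & HN & HT' & HB & HN').
  assert (HTT : vdot (T s) (T s) = 1) by (apply vnorm1; auto).
  repeat split; auto. apply vnorm1; auto.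
  pose proof (d_dot T T s _ _ HT' HT') as D1.
  assert (D2 : is_derive (fun u => vdot (T u) (T u)) s 0).
  { apply (is_derive_ext_loc (fun _ => 1)). 2: apply d_const.
    apply (filter_imp (fun u => inI a b u)). 2: apply loc_inI; auto.
    intros u Hu. destruct (FA u Hu) as (_ & HTu & _). symmetry; apply vnorm1; auto. }
  apply is_derive_unique in D1, D2. rewrite D1 in D2.
  assert (E : vdot (vscale (k s) (N s)) (T s) + vdot (T s) (vscale (k s) (N s)) = 2 * k s * vdot (T s) (N s))
    by (unfold vdot, vscale; simpl; ring).
  rewrite E in D2. nra.
Qed.

Lemma B_der a b c T N B k t s : FrenetApparatus a b c T N B k t -> inI a b s ->
  is_vderive B s (vscale (- t s) (N s)).
Proof.
  intros FA Hs. destruct (frame a b c T N B k t s FA Hs) as (HTT & HNN & HTN & HB).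
  destruct (FA s Hs) as (Hc & HT & Hk & HN & HT' & _ & HN').
  apply (vd_ext_loc (fun u => vcross (T u) (N u))).
  { apply (filter_imp (fun u => inI a b u)). 2: apply loc_inI; auto.
    intros u Hu. destruct (FA u Hu) as (_ & _ & _ & _ & _ & HBu & _). auto. }
  replace (vscale (- t s) (N s)) with
    (vadd (vcross (vscale (k s) (N s)) (N s)) (vcross (T s) (vadd (vscale (- k s) (T s)) (vscale (t s) (B s))))).
  apply vd_cross; auto.
  rewrite HB. revert HTT HNN HTN. destruct (T s) as [t1 t2 t3], (N s) as [n1 n2 n3].
  unfold vdot, vadd, vscale, vcross; simpl. intros. apply V3_eq; simpl; nsatz.
Qed.


Lemma alg1 (T N : V3) (k t x1 x2 d1 d2 : R) : vdot T T = 1 -> vdot N N = 1 -> vdot T N = 0 ->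
  vdot (vadd (vadd (vscale d1 T) (vscale (x1) (vscale k N))) (vadd (vscale d2 N) (vscale x2 (vadd (vscale (-k) T) (vscale t (vcross T N)))))) T = 0 ->
  vdot (vadd (vadd (vscale d1 T) (vscale (x1) (vscale k N))) (vadd (vscale d2 N) (vscale x2 (vadd (vscale (-k) T) (vscale t (vcross T N)))))) N = 0 ->
  d1 = k * x2 /\ d2 = - (k * x1).
Proof. destruct T, N; unfold vdot, vadd, vscale, vcross; simpl; intros; split; nsatz. Qed.

Lemma alg2 (T N B : V3) (k t x1 x2 : R) :
  vadd (vadd (vscale (k * x2) T) (vscale (x1) (vscale k N))) (vadd (vscale (- (k * x1)) N) (vscale x2 (vadd (vscale (-k) T) (vscale t B)))) = vscale (x2 * t) B.
Proof. destruct T, N, B; unfold vdot, vadd, vscale, vcross; apply V3_eq; simpl; ring. Qed.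

Lemma alg3 (Nb B : V3) (kb c : R) : vscale kb Nb = vscale c B -> 0 < kb -> vdot B B = 1 -> vdot Nb Nb = 1 ->
  Nb = vscale (vdot Nb B) B /\ vdot Nb B * vdot Nb B = 1 /\ kb * vdot Nb B = c.
Proof.
  intros H Hk HB HN.
  assert (E : kb * vdot Nb B = c).
  { transitivity (vdot (vscale kb Nb) B). unfold vdot, vscale; simpl; ring.
    rewrite H. transitivity (c * vdot B B). unfold vdot, vscale; simpl; ring. rewrite HB; ring. }
  assert (E2 : Nb = vscale (vdot Nb B) B).
  { destruct Nb as [n1 n2 n3], B as [b1 b2 b3]. unfold vscale in *; simpl in *.
    injection H; intros H3 H2 H1. apply V3_eq; simpl; apply (Rmult_eq_reg_l kb); try lra;
    rewrite <- Rmult_assoc, E; auto. }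
  repeat split; auto.
  rewrite E2 in HN. revert HN HB. unfold vdot, vscale; simpl. intros; nsatz.
Qed.

Lemma alg4 (T N Nb : V3) (kb tb t x1 x2 e : R) :
  let B := vcross T N in let Tb := vadd (vscale x1 T) (vscale x2 N) in
  Nb = vscale e B ->
  vdot (vadd (vscale (- kb) Tb) (vscale tb (vcross Tb Nb))) B + vdot Nb (vscale (- t) N) = 0.
Proof. intros B Tb ->. subst B Tb. destruct T, N; unfold vdot, vadd, vscale, vcross; simpl; ring. Qed.

Lemma alg5 (T N : V3) (x1 x2 eps : R) : vdot T T = 1 -> vdot N N = 1 -> vdot T N = 0 ->
  vcross (vadd (vscale x1 T) (vscale x2 N)) (vscale eps (vcross T N)) =
  vscale eps (vadd (vscale x2 T) (vscale (- x1) N)).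
Proof. destruct T, N; unfold vdot, vadd, vscale, vcross; simpl; intros; apply V3_eq; simpl; nsatz. Qed.

Lemma alg6 (T N : V3) (x1 x2 eps kb tb t : R) : vdot T T = 1 -> vdot N N = 1 -> vdot T N = 0 ->
  eps * eps = 1 -> x1 ^ 2 + x2 ^ 2 = 1 ->
  vadd (vscale (- kb) (vadd (vscale x1 T) (vscale x2 N))) (vscale tb (vscale eps (vadd (vscale x2 T) (vscale (- x1) N))))
   = vscale eps (vscale (- t) N) -> tb = t * x1.
Proof.
  destruct T, N; unfold vdot, vadd, vscale, vcross; simpl; intros.
  injection H4; intros; clear H4.
  assert (D1 : - kb * x1 + tb * eps * x2 = 0) by nsatz.
  assert (D2 : - kb * x2 - tb * eps * x1 = - eps * t) by nsatz.
  assert (D3 : tb * eps = eps * t * x1) by nsatz.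
  nsatz.
Qed.


Lemma cont_nz (f : R -> R) s : ex_derive f s -> f s <> 0 ->
  exists d, 0 < d /\ forall u, Rabs (u - s) < d -> f u <> 0.
Proof.
  intros Hd Hnz.
  pose proof (ex_derive_continuous (K:=R_AbsRing) (V:=R_NormedModule) f s Hd) as Hc.
  assert (He : 0 < Rabs (f s)) by (apply Rabs_pos_lt; auto).
  destruct (proj1 (filterlim_locally f (f s)) Hc (mkposreal _ He)) as [d Hdd].
  exists d. split. apply cond_pos. intros u Hu Hfu.
  specialize (Hdd u Hu). unfold ball in Hdd; simpl in Hdd. unfold AbsRing_ball in Hdd.
  rewrite Hfu in Hdd. unfold abs, minus, plus, opp in Hdd; simpl in Hdd.
  replace (0 + - f s) with (- f s) in Hdd by ring. rewrite Rabs_Ropp in Hdd. lra.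
Qed.

Lemma d_atan (h : R -> R) s dh : is_derive h s dh ->
  is_derive (fun u => atan (h u)) s (dh / (1 + (h s) ^ 2)).
Proof.
  intros H. eapply d_ext. apply (is_derive_comp atan h s). apply is_derive_Reals.
  apply derivable_pt_lim_atan. exact H. simpl. unfold scal; simpl. unfold mult; simpl. field.
  nra.
Qed.

Lemma d_sin (h : R -> R) s dh : is_derive h s dh ->
  is_derive (fun u => sin (h u)) s (cos (h s) * dh).
Proof.
  intros H. eapply d_ext. apply (is_derive_comp sin h s). apply is_derive_Reals.
  apply derivable_pt_lim_sin. exact H. unfold scal; simpl. unfold mult; simpl. ring.
Qed.

Lemma d_cos (h : R -> R) s dh : is_derive h s dh ->
  is_derive (fun u => cos (h u)) s (- sin (h s) * dh).
Proof.
  intros H. eapply d_ext. apply (is_derive_comp cos h s). apply is_derive_Reals.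
  apply derivable_pt_lim_cos. exact H. unfold scal; simpl. unfold mult; simpl. ring.
Qed.

Lemma alg_chart2 X1 X2 K : X2 <> 0 -> X1^2+X2^2=1 ->
  ((K*X2)*X2 - X1*(-(K*X1))) / (X2*(X2*1)) / (1 + X1/X2*(X1/X2*1)) = K.
Proof.
  intros H S.
  assert (E1 : (K*X2)*X2 - X1*(-(K*X1)) = K) by (transitivity (K*(X1^2+X2^2)); [ring|rewrite S; ring]).
  assert (E2 : 1 + X1/X2*(X1/X2*1) = /(X2*(X2*1))).
  { field_simplify_eq; [|auto]. transitivity (X1^2+X2^2); [ring|rewrite S; ring]. }
  rewrite E1, E2. field. auto.
Qed.
Lemma alg_chart1 X1 X2 K : X1 <> 0 -> X1^2+X2^2=1 ->
  -(((-(K*X1))*X1 - X2*(K*X2)) / (X1*(X1*1)) / (1 + X2/X1*(X2/X1*1))) = K.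
Proof.
  intros H S.
  assert (E1 : (-(K*X1))*X1 - X2*(K*X2) = -K) by (transitivity (-K*(X1^2+X2^2)); [ring|rewrite S; ring]).
  assert (E2 : 1 + X2/X1*(X2/X1*1) = /(X1*(X1*1))).
  { field_simplify_eq; [|auto]. transitivity (X1^2+X2^2); [ring|rewrite S; ring]. }
  rewrite E1, E2. field. auto.
Qed.

Lemma chart a b (x1 x2 k : R -> R) s : inI a b s ->
  (forall u, inI a b u -> x1 u ^ 2 + x2 u ^ 2 = 1) ->
  (forall u, inI a b u -> is_derive x1 u (k u * x2 u) /\ is_derive x2 u (- (k u * x1 u))) ->
  exists e, 0 < e /\ exists G : R -> R, forall u, Rabs (u - s) < e -> is_derive G u (k u).
Proof.
  intros Hs Hsum Hd.
  destruct (inI_open a b s Hs) as [e1 [He1 Hb1]].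
  destruct (Req_dec (x2 s) 0) as [Hz|Hnz].
  - assert (Hnz : x1 s <> 0) by (intro; pose proof (Hsum s Hs); rewrite Hz, H in H0; lra).
    destruct (cont_nz x1 s) as [e2 [He2 Hb2]]; auto.
    { destruct (Hd s Hs) as [D1 D2]. exists (k s * x2 s); exact D1. }
    exists (Rmin e1 e2). split. apply Rmin_pos; auto.
    exists (fun u => - atan (x2 u / x1 u)). intros u Hu.
    assert (Hu1 : inI a b u) by (apply Hb1; pose proof (Rmin_l e1 e2); lra).
    assert (Hu2 : x1 u <> 0) by (apply Hb2; pose proof (Rmin_r e1 e2); lra).
    destruct (Hd u Hu1) as [D1 D2]. pose proof (Hsum u Hu1) as S.
    eapply d_ext. apply (is_derive_opp (fun u => atan (x2 u / x1 u))).
    apply d_atan. apply is_derive_div; eauto.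
    apply alg_chart1; auto.
  - destruct (cont_nz x2 s) as [e2 [He2 Hb2]]; auto.
    { eexists; apply (Hd s Hs). }
    exists (Rmin e1 e2). split. apply Rmin_pos; auto.
    exists (fun u => atan (x1 u / x2 u)). intros u Hu.
    assert (Hu1 : inI a b u) by (apply Hb1; pose proof (Rmin_l e1 e2); lra).
    assert (Hu2 : x2 u <> 0) by (apply Hb2; pose proof (Rmin_r e1 e2); lra).
    destruct (Hd u Hu1) as [D1 D2]. pose proof (Hsum u Hu1) as S.
    eapply d_ext. apply d_atan. apply is_derive_div; eauto.
    apply alg_chart2; auto.
Qed.


Lemma angle x y : x ^ 2 + y ^ 2 = 1 -> exists th, sin th = x /\ cos th = y.
Proof.
  intros S.
  assert (Hy : -1 <= y <= 1) by nra.
  assert (Hs : sqrt (1 - y²) = Rabs x).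
  { rewrite <- sqrt_Rsqr_abs. f_equal. unfold Rsqr. nra. }
  destruct (Rle_dec 0 x).
  - exists (acos y). rewrite sin_acos, cos_acos by auto. rewrite Hs, Rabs_right by lra. auto.
  - exists (- acos y). rewrite sin_neg, cos_neg, sin_acos, cos_acos by auto.
    rewrite Hs, Rabs_left by lra. split; auto; ring.
Qed.

Lemma vadd0 (X Y : V3) : vadd (vscale 0 X) Y = Y.
Proof. destruct X, Y; apply V3_eq; simpl; ring. Qed.

Lemma BB1 (T N : V3) : vdot T T = 1 -> vdot N N = 1 -> vdot T N = 0 -> vdot (vcross T N) (vcross T N) = 1.
Proof. destruct T, N; unfold vdot, vcross; simpl; intros; nsatz. Qed.

Theorem theorem3
  (a b : Rbar) (alpha : R -> V3) (T N B : R -> V3) (kappa tau : R -> R)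
  (x1 x2 : R -> R) (beta : R -> V3)
  (Tb Nb Bb : R -> V3) (kb tb : R -> R) :
  FrenetApparatus a b alpha T N B kappa tau ->
  (forall s, inI a b s -> ex_derive x1 s /\ ex_derive x2 s) ->
  (forall s, inI a b s -> x1 s ^ 2 + x2 s ^ 2 = 1) ->
  (forall s, inI a b s -> is_vderive beta s (vadd (vscale (x1 s) (T s)) (vscale (x2 s) (N s)))) ->
  (forall s, inI a b s -> exists v,
      is_vderive (fun u => vadd (vscale (x1 u) (T u)) (vscale (x2 u) (N u))) s v /\
      vdot v (T s) = 0 /\ vdot v (N s) = 0) ->
  FrenetApparatus a b beta Tb Nb Bb kb tb ->
  exists theta : R -> R,
    (forall s, inI a b s -> is_derive theta s (kappa s)) /\
    exists eps : R, (eps = 1 \/ eps = -1) /\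
    forall s, inI a b s ->
      x1 s = sin (theta s) /\ x2 s = cos (theta s) /\
      Tb s = vadd (vscale (sin (theta s)) (T s)) (vscale (cos (theta s)) (N s)) /\
      Nb s = vscale eps (B s) /\
      Bb s = vscale eps (vadd (vscale (cos (theta s)) (T s)) (vscale (- sin (theta s)) (N s))) /\
      kb s = eps * tau s * cos (theta s) /\
      tb s = tau s * sin (theta s).
Proof.
  intros FA Hx Hsum Hb Horth FAb.
  assert (Hxd : forall s, inI a b s -> is_derive x1 s (kappa s * x2 s) /\ is_derive x2 s (- (kappa s * x1 s))).
  { intros s Hs. destruct (Hx s Hs) as [[d1 H1] [d2 H2]].
    destruct (frame _ _ _ _ _ _ _ _ s FA Hs) as (HTT & HNN & HTN & HB).
    destruct (FA s Hs) as (_ & _ & _ & _ & HT' & _ & HN').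
    destruct (Horth s Hs) as [v [Hv [Hv1 Hv2]]].
    pose proof (vd_add _ _ s _ _ (vd_scale x1 T s _ _ H1 HT') (vd_scale x2 N s _ _ H2 HN')) as Hw.
    pose proof (vd_unique _ _ _ _ Hv Hw) as Ev. rewrite Ev, HB in Hv1, Hv2.
    destruct (alg1 (T s) (N s) (kappa s) (tau s) (x1 s) (x2 s) d1 d2 HTT HNN HTN Hv1 Hv2) as [E1 E2].
    rewrite E1 in H1; rewrite E2 in H2. auto. }
  assert (Hcomb : forall s, inI a b s -> is_vderive (fun u => vadd (vscale (x1 u) (T u)) (vscale (x2 u) (N u))) s (vscale (x2 s * tau s) (B s))).
  { intros s Hs. destruct (Hxd s Hs) as [H1 H2]. destruct (FA s Hs) as (_ & _ & _ & _ & HT' & _ & HN').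
    rewrite <- (alg2 (T s) (N s) (B s) (kappa s) (tau s) (x1 s) (x2 s)).
    exact (vd_add _ _ s _ _ (vd_scale x1 T s _ _ H1 HT') (vd_scale x2 N s _ _ H2 HN')). }
  destruct (global_prim a b kappa (fun s Hs => chart a b x1 x2 kappa s Hs Hsum Hxd)) as [F HF].
  destruct (classic (exists s0, inI a b s0)) as [[s0 Hs0]|Hne].
  2:{ exists (fun _ => 0). split. intros s Hs; exfalso; eauto. exists 1. split. left; auto.
      intros s Hs; exfalso; eauto. }
  destruct (angle (x1 s0) (x2 s0) (Hsum s0 Hs0)) as [th0 [Hth1 Hth2]].
  set (theta := fun u => F u + (th0 - F s0)).
  assert (Hth : forall s, inI a b s -> is_derive theta s (kappa s)).
  { intros s Hs. unfold theta. eapply d_ext. apply d_plus. apply HF; auto. apply d_const. ring. }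
  assert (Hseg : forall s v, inI a b s -> Rmin s s0 <= v <= Rmax s s0 -> inI a b v).
  { intros s v Hs Hv. destruct (Rle_dec s s0).
    - rewrite Rmin_left, Rmax_right in Hv by lra. apply (inI_conv a b s v s0); auto.
    - rewrite Rmin_right, Rmax_left in Hv by lra. apply (inI_conv a b s0 v s); auto. }
  assert (Hg : forall s, inI a b s -> x1 s * cos (theta s) - x2 s * sin (theta s) = 0 /\
                                      x1 s * sin (theta s) + x2 s * cos (theta s) = 1).
  { intros s Hs.
    assert (H0 : theta s0 = th0) by (unfold theta; ring).
    split.
    - transitivity (x1 s0 * cos (theta s0) - x2 s0 * sin (theta s0)).
      + apply (zero_der2 (fun u => x1 u * cos (theta u) - x2 u * sin (theta u))).
        intros v Hv. assert (Hvi := Hseg s v Hs Hv). destruct (Hxd v Hvi) as [D1 D2].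
        eapply d_ext. apply (d_minus (fun u => x1 u * cos (theta u)) (fun u => x2 u * sin (theta u))).
        apply (d_mult x1 (fun u => cos (theta u))). exact D1. apply d_cos; apply Hth; auto.
        apply (d_mult x2 (fun u => sin (theta u))). exact D2. apply d_sin; apply Hth; auto.
        ring.
      + rewrite H0, Hth1, Hth2. ring.
    - transitivity (x1 s0 * sin (theta s0) + x2 s0 * cos (theta s0)).
      + apply (zero_der2 (fun u => x1 u * sin (theta u) + x2 u * cos (theta u))).
        intros v Hv. assert (Hvi := Hseg s v Hs Hv). destruct (Hxd v Hvi) as [D1 D2].
        eapply d_ext. apply (d_plus (fun u => x1 u * sin (theta u)) (fun u => x2 u * cos (theta u))).
        apply (d_mult x1 (fun u => sin (theta u))). exact D1. apply d_sin; apply Hth; auto.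
        apply (d_mult x2 (fun u => cos (theta u))). exact D2. apply d_cos; apply Hth; auto.
        ring.
      + rewrite H0, Hth1, Hth2. pose proof (Hsum s0 Hs0) as S0. rewrite <- S0. ring. }
  assert (Hsc : forall s, inI a b s -> x1 s = sin (theta s) /\ x2 s = cos (theta s)).
  { intros s Hs. destruct (Hg s Hs) as [G1 G2]. pose proof (sin2_cos2 (theta s)) as SC.
    unfold Rsqr in SC. split; nsatz. }
  assert (HTb : forall s, inI a b s -> Tb s = vadd (vscale (x1 s) (T s)) (vscale (x2 s) (N s))).
  { intros s Hs. destruct (FAb s Hs) as (Hc & _). eapply vd_unique; [exact Hc | apply Hb; auto]. }
  assert (HkN : forall s, inI a b s -> vscale (kb s) (Nb s) = vscale (x2 s * tau s) (B s)).
  { intros s Hs. destruct (FAb s Hs) as (_ & _ & _ & _ & HTb' & _).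
    eapply vd_unique. exact HTb'.
    apply (vd_ext_loc (fun u => vadd (vscale (x1 u) (T u)) (vscale (x2 u) (N u)))).
    apply (filter_imp (fun u => inI a b u)); [|apply loc_inI; auto].
    intros u Hu; symmetry; apply HTb; auto.
    apply Hcomb; auto. }
  set (e := fun s => vdot (Nb s) (B s)).
  assert (He : forall s, inI a b s -> Nb s = vscale (e s) (B s) /\ e s * e s = 1 /\ kb s * e s = x2 s * tau s).
  { intros s Hs. destruct (frame _ _ _ _ _ _ _ _ s FA Hs) as (HTT & HNN & HTN & HB).
    destruct (FAb s Hs) as (_ & _ & Hkb & HNb & _).
    apply alg3; auto. rewrite HB; apply BB1; auto. apply vnorm1; auto. }
  assert (He' : forall s, inI a b s -> is_derive e s 0).
  { intros s Hs. destruct (FAb s Hs) as (_ & _ & _ & _ & _ & HBb & HNb').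
    pose proof (B_der _ _ _ _ _ _ _ _ s FA Hs) as HB'.
    destruct (frame _ _ _ _ _ _ _ _ s FA Hs) as (_ & _ & _ & HB).
    pose proof (proj1 (He s Hs)) as HNe. rewrite HB in HNe.
    eapply d_ext. apply (d_dot Nb B s _ _ HNb' HB').
    rewrite HBb, (HTb s Hs), HB.
    apply (alg4 (T s) (N s) (Nb s) (kb s) (tb s) (tau s) (x1 s) (x2 s) (e s)). exact HNe. }
  set (eps := e s0).
  assert (Hec : forall s, inI a b s -> e s = eps).
  { intros s Hs. unfold eps. apply (zero_der2 e s s0). intros v Hv. apply He'; eauto. }
  exists theta. split; auto. exists eps. split.
  { destruct (He s0 Hs0) as (_ & E2 & _). fold eps in E2.
    assert ((eps - 1) * (eps + 1) = 0) by nra.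
    destruct (Rmult_integral _ _ H); [left|right]; lra. }
  intros s Hs.
  destruct (Hsc s Hs) as [S1 S2]. destruct (He s Hs) as (HNe & Hee & Hke).
  rewrite (Hec s Hs) in HNe, Hee, Hke.
  destruct (frame _ _ _ _ _ _ _ _ s FA Hs) as (HTT & HNN & HTN & HB).
  destruct (FAb s Hs) as (_ & _ & _ & _ & _ & HBb & HNb').
  rewrite <- S1, <- S2.
  assert (HBb2 : Bb s = vscale eps (vadd (vscale (x2 s) (T s)) (vscale (- x1 s) (N s)))).
  { rewrite HBb, (HTb s Hs), HNe, HB. apply alg5; auto. }
  split; auto. split; auto. split. apply HTb; auto. split. exact HNe. split. exact HBb2. split.
  - transitivity (kb s * (eps * eps)). rewrite Hee; ring.
    rewrite <- Rmult_assoc, Hke; ring.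
  - assert (HD : is_vderive Nb s (vadd (vscale 0 (B s)) (vscale eps (vscale (- tau s) (N s))))).
    { apply (vd_ext_loc (fun u => vscale ((fun _ => eps) u) (B u))).
      apply (filter_imp (fun u => inI a b u)); [|apply loc_inI; auto].
      intros u Hu. destruct (He u Hu) as (Hu1 & _). rewrite Hu1, (Hec u Hu); auto.
      apply vd_scale. apply d_const. apply (B_der _ _ _ _ _ _ _ _ s FA Hs). }
    rewrite vadd0 in HD.
    pose proof (vd_unique _ _ _ _ HNb' HD) as HE.
    rewrite (HTb s Hs), HBb2 in HE.
    apply (alg6 (T s) (N s) (x1 s) (x2 s) eps (kb s) (tb s) (tau s)); auto.
Qed.
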